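(* The map $\psi\colon G/M\to\mathfrak P$, $gM\mapsto(g\omega_-,g\omega_+,go)$, is a homeomorphism.
   Context: Let $q\ge2$ and $\mathfrak G=(\mathfrak X,\mathfrak E)$ the $(q+1)$-regular tree with vertex set $\mathfrak X$ (discrete) and graph distance $d$. The boundary $\Omega$ is the set of infinite non-backtracking edge chains modulo ''eventually equal up to shift'', with the topology generated by the sets $\partial_+\vec e$ of classes of chains starting with the directed edge $\vec e$. For $\omega_1\ne\omega_2$ in $\Omega$, $]\omega_1,\omega_2[$ denotes the vertex set of the geodesic joining them. Fix a vertex $o$ and $\omega_-\neq\omega_+$ in $\Omega$ with $o\in]\omega_-,\omega_+[$. $G=\mathrm{Aut}(\mathfrak G)$ carries the topology of pointwise convergence on $\mathfrak X$ (basic neighbourhoods $\{h:hx=g_0x\ \forall x\in F\}$, $F\subseteq\mathfrak X$ finite) and acts on $\Omega$. $M=\{\gamma\in G:\gamma$ fixes every vertex of $]\omega_-,\omega_+[\}$ (a subgroup of $\mathrm{Stab}_G(o)$); $G/M$ has the quotient topology. $\mathfrak P$ is the set of triples $(\omega_1,\omega_2,x)\in\Omega\times\Omega\times\mathfrak X$ with $\omega_1\ne\omega_2$ and $x\in]\omega_1,\omega_2[$, with the subspace topology. *)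

(* Defs.v *)
From Stdlib Require Import Arith Lia ZArith List Classical
  FunctionalExtensionality PropExtensionality.



Definition Topology (T : Type) := (T -> Prop) -> Prop.

Definition generated {T : Type} (S : (T -> Prop) -> Prop) : Topology T :=
  fun U => forall x, U x ->
    exists l : list (T -> Prop),
      Forall S l /\ (forall B, In B l -> B x) /\
      (forall y, (forall B, In B l -> B y) -> U y).

Definition discrete_top (T : Type) : Topology T := fun _ => True.

Definition prod_top {A B : Type} (tA : Topology A) (tB : Topology B) : Topology (A * B) :=
  generated (fun W => (exists U, tA U /\ W = (fun p => U (fst p))) \/
                      (exists V, tB V /\ W = (fun p => V (snd p)))).

Definition subspace_top {T : Type} (t : Topology T) (P : T -> Prop) : Topology {x : T | P x} :=
  fun V => exists U, t U /\ forall x, V x <-> U (proj1_sig x).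

Definition quotient_top {A B : Type} (t : Topology A) (pi : A -> B) : Topology B :=
  fun V => t (fun a => V (pi a)).

Definition continuous_top {A B : Type} (tA : Topology A) (tB : Topology B) (f : A -> B) :=
  forall V, tB V -> tA (fun a => V (f a)).

Definition homeomorphism {A B : Type} (tA : Topology A) (tB : Topology B) (f : A -> B) :=
  exists g : B -> A, (forall a, g (f a) = a) /\ (forall b, f (g b) = b) /\
    continuous_top tA tB f /\ continuous_top tB tA g.

Section Tree.
Variable X : Type.
Variable adj : X -> X -> Prop.

Definition is_walk (n : nat) (p : nat -> X) := forall i, i < n -> adj (p i) (p (S i)).

Definition regular_tree (q : nat) : Prop :=
  (forall x y, adj x y -> adj y x) /\
  (forall x, ~ adj x x) /\
  (forall x y, exists n p, is_walk n p /\ p 0 = x /\ p n = y) /\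
  (forall n p, 1 <= n -> is_walk n p -> (forall i, i + 2 <= n -> p (i + 2) <> p i) ->
     p 0 <> p n) /\
  (forall x, exists l, NoDup l /\ length l = q + 1 /\ forall y, adj x y <-> In y l).

(** Infinite non-backtracking edge chains, encoded by their vertex sequences. *)
Definition is_ray (v : nat -> X) :=
  forall n, adj (v n) (v (S n)) /\ v (S (S n)) <> v n.

Definition ray_equiv (v w : nat -> X) := exists k l, forall n, v (n + k) = w (n + l).

Definition ray_class (v : nat -> X) : (nat -> X) -> Prop :=
  fun w => is_ray w /\ ray_equiv v w.

Definition Omega := {A : (nat -> X) -> Prop | exists v, is_ray v /\ A = ray_class v}.

Definition bd_plus (x y : X) : Omega -> Prop :=
  fun w => exists v, proj1_sig w v /\ v 0 = x /\ v 1 = y.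

Definition omega_top : Topology Omega :=
  generated (fun W => exists x y, adj x y /\ W = bd_plus x y).

(** Vertices of the geodesic ]w1,w2[ : vertices of a bi-infinite non-backtracking
    line whose backward half lies in w1 and forward half lies in w2. *)
Definition is_line (u : Z -> X) :=
  forall z, adj (u z) (u (z + 1)%Z) /\ u (z + 2)%Z <> u z.

Definition geodesic (w1 w2 : Omega) (x : X) : Prop :=
  exists u, is_line u /\ proj1_sig w1 (fun n => u (- Z.of_nat n)%Z) /\
    proj1_sig w2 (fun n => u (Z.of_nat n)) /\ exists z, u z = x.

(** Automorphism group with the topology of pointwise convergence. *)
Definition is_aut (g : X -> X) :=
  (exists h : X -> X, (forall x, h (g x) = x) /\ (forall x, g (h x) = x)) /\
  (forall x y, adj x y <-> adj (g x) (g y)).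

Definition Aut := {g : X -> X | is_aut g}.

Definition aut_top : Topology Aut :=
  fun U => forall g, U g -> exists F : list X,
    forall h : Aut, (forall x, In x F -> proj1_sig h x = proj1_sig g x) -> U h.

Definition act_pred (g : X -> X) (A : (nat -> X) -> Prop) : (nat -> X) -> Prop :=
  fun w => is_ray w /\ exists v, A v /\ ray_equiv (fun n => g (v n)) w.

Lemma ray_equiv_refl v : ray_equiv v v.
Proof. exists 0, 0; auto. Qed.

Lemma ray_equiv_trans u v w : ray_equiv u v -> ray_equiv v w -> ray_equiv u w.
Proof.
  intros [k [l H1]] [k' [l' H2]]. exists (k' + k), (l + l'). intros n.
  replace (n + (k' + k)) with ((n + k') + k) by lia. rewrite H1.
  replace (n + k' + l) with ((n + l) + k') by lia. rewrite H2. f_equal; lia.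
Qed.

Lemma ray_equiv_map (g : X -> X) v w : ray_equiv v w ->
  ray_equiv (fun n => g (v n)) (fun n => g (w n)).
Proof. intros [k [l H]]. exists k, l. intros n. now rewrite H. Qed.

Lemma act_class (g : X -> X) (hg : is_aut g) (A : (nat -> X) -> Prop)
  (hA : exists v, is_ray v /\ A = ray_class v) :
  exists v, is_ray v /\ act_pred g A = ray_class v.
Proof.
  destruct hA as [v0 [hv0 ->]]. destruct hg as [[h [hK _]] hadj].
  exists (fun n => g (v0 n)). split.
  - intros n. destruct (hv0 n) as [a b]. split.
    + now apply (proj1 (hadj _ _)).
    + intros E. apply b. rewrite <- (hK (v0 (S (S n)))), E. apply hK.
  - apply functional_extensionality; intros w. apply propositional_extensionality.
    unfold act_pred, ray_class. split.
    + intros [hw [v [[_ e1] e2]]]. split; auto.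
      apply ray_equiv_trans with (fun n => g (v n)); auto.
      now apply ray_equiv_map.
    + intros [hw e]. split; auto. exists v0. split; [split; auto; apply ray_equiv_refl|auto].
Qed.

Definition act (g : Aut) (w : Omega) : Omega :=
  exist _ (act_pred (proj1_sig g) (proj1_sig w))
        (act_class (proj1_sig g) (proj2_sig g) (proj1_sig w) (proj2_sig w)).

Section Cosets.
Variables wm wp : Omega.

Definition M_stab (m : Aut) : Prop :=
  forall x, geodesic wm wp x -> proj1_sig m x = x.

Definition coset_pred (g : Aut) : Aut -> Prop :=
  fun h => exists m, M_stab m /\ forall x, proj1_sig h x = proj1_sig g (proj1_sig m x).

Definition GmodM := {C : Aut -> Prop | exists g, C = coset_pred g}.

Definition coset (g : Aut) : GmodM := exist _ (coset_pred g) (ex_intro _ g eq_refl).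

Definition GmodM_top : Topology GmodM := quotient_top aut_top coset.
End Cosets.

Definition P_pred (t : Omega * Omega * X) : Prop :=
  fst (fst t) <> snd (fst t) /\ geodesic (fst (fst t)) (snd (fst t)) (snd t).

Definition Pspace := {t : Omega * Omega * X | P_pred t}.

Definition P_top : Topology Pspace :=
  subspace_top (prod_top (prod_top omega_top omega_top) (discrete_top X)) P_pred.

End Tree.

Arguments regular_tree {X} adj q.
Arguments Omega {X} adj.
Arguments geodesic {X} adj w1 w2 x.
Arguments Aut {X} adj.
Arguments act {X adj} g w.
Arguments GmodM {X} adj wm wp.
Arguments coset {X} adj wm wp g.
Arguments GmodM_top {X} adj wm wp.
Arguments Pspace {X} adj.
Arguments P_top {X} adj.

(* Main.v *)
Require Import Defs.
From Stdlib Require Import Arith ZArith List Lia Classical ClassicalEpsilon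
  FunctionalExtensionality PropExtensionality ProofIrrelevance FinFun.
Import ListNotations.

Section Tree1.
Variable X : Type.
Variable adj : X -> X -> Prop.
Variable q : nat.
Hypothesis htree : regular_tree adj q.

Lemma adj_sym x y : adj x y -> adj y x.
Proof. destruct htree as [h _]. apply h. Qed.

Lemma acyc n p : 1 <= n -> is_walk X adj n p ->
  (forall i, i + 2 <= n -> p (i + 2) <> p i) -> p 0 <> p n.
Proof. destruct htree as [_ [_ [_ [h _]]]]. apply h. Qed.

Definition nbw (n : nat) (p : nat -> X) :=
  is_walk X adj n p /\ forall i, i + 2 <= n -> p (i + 2) <> p i.

Lemma nbw_weaken n m p : nbw n p -> m <= n -> nbw m p.
Proof.
  intros [h1 h2] hm; split.
  - intros i hi; apply h1; lia.
  - intros i hi; apply h2; lia.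
Qed.

Lemma nbw_unique : forall n p m p', nbw n p -> nbw m p' -> p 0 = p' 0 -> p n = p' m ->
  n = m /\ forall i, i <= n -> p i = p' i.
Proof.
  induction n as [|n IH]; intros p m p' hp hp' h0 hn.
  - destruct m as [|m].
    + split; auto. intros i hi; replace i with 0 by lia; auto.
    + exfalso. destruct hp' as [w nb]. apply (acyc (S m) p'); auto; try lia.
      congruence.
  - destruct m as [|m].
    + exfalso. destruct hp as [w nb]. apply (acyc (S n) p); auto; try lia.
      congruence.
    + destruct (classic (p n = p' m)) as [E|E].
      * destruct (IH p m p') as [e1 e2]; auto.
        -- apply (nbw_weaken (S n)); auto.
        -- apply (nbw_weaken (S m)); auto.
        -- split; [lia|]. intros i hi. destruct (Nat.eq_dec i (S n)); subst; auto.
           apply e2; lia.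
      * exfalso.
        set (T := S n + S m).
        set (c := fun i => if i <=? S n then p i else p' (T - i)).
        assert (clo : forall i, i <= S n -> c i = p i).
        { intros i hi; unfold c. destruct (Nat.leb_spec i (S n)); auto; lia. }
        assert (chi : forall i, S n <= i -> c i = p' (T - i)).
        { intros i hi; unfold c. destruct (Nat.leb_spec i (S n)).
          - replace i with (S n) by lia. rewrite hn. f_equal. unfold T; lia.
          - auto. }
        destruct hp as [w nb]; destruct hp' as [w' nb'].
        apply (acyc T c).
        -- unfold T; lia.
        -- intros i hi. destruct (Nat.leb_spec (S i) (S n)).
           ++ rewrite !clo by lia. apply w; lia.
           ++ rewrite !chi by lia. apply adj_sym.
              replace (T - i) with (S (T - S i)) by (unfold T; lia). apply w'. unfold T; lia.
        -- intros i hi. destruct (Nat.leb_spec (i + 2) (S n)).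
           ++ rewrite !clo by lia. apply nb; lia.
           ++ destruct (Nat.leb_spec (S n) i).
              ** rewrite !chi by lia.
                 replace (T - i) with ((T - (i + 2)) + 2) by (unfold T; lia).
                 intro e; apply (nb' (T - (i+2))); [unfold T; lia|]. auto.
              ** replace i with n by lia. rewrite chi by lia. rewrite clo by lia.
                 replace (T - (n + 2)) with m by (unfold T; lia). auto.
        -- rewrite clo by lia. rewrite chi by lia. replace (T - T) with 0 by lia. auto.
Qed.

Lemma nbw_exists x y : exists n p, nbw n p /\ p 0 = x /\ p n = y.
Proof.
  destruct htree as [_ [_ [hc _]]]. destruct (hc x y) as [n [p [hw [h0 hn]]]].
  subst. clear hc.

  assert (H : forall n, is_walk X adj n p -> exists k r, nbw k r /\ r 0 = p 0 /\ r k = p n).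
  { intros n0. induction n0 as [|n0 IH]; intros hw0.
    - exists 0, p. split; [split; [intros i hi; lia|intros i hi; lia]|]. auto.
    - destruct IH as [k [r [hr [r0 rk]]]].
      { intros i hi; apply hw0; lia. }
      destruct (classic (1 <= k /\ r (k - 1) = p (S n0))) as [[hk E]|E].
      + exists (k - 1), r. split; [apply (nbw_weaken k); auto; lia|]. auto.
      + exists (S k), (fun i => if i <=? k then r i else p (S n0)). split; [split|].
        * intros i hi. destruct (Nat.leb_spec i k); destruct (Nat.leb_spec (S i) k).
          -- apply hr; lia.
          -- replace i with k by lia. rewrite rk. apply hw0; lia.
          -- lia.
          -- lia.
        * intros i hi. destruct (Nat.leb_spec (i+2) k); destruct (Nat.leb_spec i k).
          -- apply hr; lia.
          -- lia.
          -- intro e. apply E. split; [lia|]. replace i with (k - 1) in e by lia. auto.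
          -- lia.
        * split; cbv beta; [destruct (Nat.leb_spec 0 k); [auto|lia] | destruct (Nat.leb_spec (S k) k); [lia|auto]]. }
  apply H; auto.
Qed.

Definition fwd (u : Z -> X) : nat -> X := fun n => u (Z.of_nat n).
Definition back (u : Z -> X) : nat -> X := fun n => u (- Z.of_nat n)%Z.

Lemma line_seg u s n : is_line X adj u -> nbw n (fun i => u (s + Z.of_nat i)%Z).
Proof.
  intros hu; split.
  - intros i hi. destruct (hu (s + Z.of_nat i)%Z) as [a _].
    replace (s + Z.of_nat (S i))%Z with (s + Z.of_nat i + 1)%Z by lia. auto.
  - intros i hi. destruct (hu (s + Z.of_nat i)%Z) as [_ b].
    replace (s + Z.of_nat (i + 2))%Z with (s + Z.of_nat i + 2)%Z by lia. auto.
Qed.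

Lemma line_inj u z1 z2 : is_line X adj u -> u z1 = u z2 -> z1 = z2.
Proof.
  intros hu e.
  assert (H : forall a b, (a < b)%Z -> u a <> u b).
  { intros a b hab eab. destruct (line_seg u a (Z.to_nat (b - a)) hu) as [w nb].
    assert (h1 : 1 <= Z.to_nat (b - a)) by lia. apply (acyc _ _ h1 w nb). simpl.
    replace (a + Z.of_nat (Z.to_nat (b - a)))%Z with b by lia.
    replace (a + 0)%Z with a by lia. auto. }
  destruct (Z.lt_trichotomy z1 z2) as [h|[h|h]]; auto.
  - exfalso; apply (H _ _ h e).
  - exfalso; apply (H _ _ h); auto.
Qed.

Lemma ray_nbw r n : is_ray X adj r -> nbw n r.
Proof.
  intros hr; split.
  - intros i _; apply hr.
  - intros i _. replace (i + 2) with (S (S i)) by lia. apply hr.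
Qed.

Lemma ray_inj r i j : is_ray X adj r -> r i = r j -> i = j.
Proof.
  intros hr e. destruct (nbw_unique i r j r); auto using ray_nbw.
Qed.

Lemma line_fwd u : is_line X adj u -> is_ray X adj (fwd u).
Proof.
  intros hu n. unfold fwd. destruct (hu (Z.of_nat n)) as [a b].
  replace (Z.of_nat (S n)) with (Z.of_nat n + 1)%Z by lia.
  replace (Z.of_nat (S (S n))) with (Z.of_nat n + 2)%Z by lia. auto.
Qed.

Lemma line_back u : is_line X adj u -> is_ray X adj (back u).
Proof.
  intros hu n. unfold back. destruct (hu (- Z.of_nat (S (S n)))%Z) as [a b].
  destruct (hu (- Z.of_nat (S n)))%Z as [a' b'].
  split.
  - apply adj_sym. replace (- Z.of_nat n)%Z with (- Z.of_nat (S n) + 1)%Z by lia. auto.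
  - intro e. apply b. replace (- Z.of_nat (S (S n)) + 2)%Z with (- Z.of_nat n)%Z by lia.
    auto.
Qed.


(** * Labelings and decoding *)
Definition deg (p : option X) := match p with None => S q | Some _ => q end.

Definition entry_ok (p : option X) (y : X) :=
  p = None \/ exists p0, p = Some p0 /\ adj y p0.

Definition lab_ok (L : option X -> X -> list X) := forall p y, entry_ok p y ->
  NoDup (L p y) /\ (forall z, In z (L p y) <-> adj y z /\ Some z <> p) /\
  length (L p y) = deg p.

Fixpoint D (x : X) (L : option X -> X -> list X) (c : list nat) : option X * X :=
  match c with
  | [] => (None, x)
  | a :: c' => let d := D x L c' in (Some (snd d), nth a (L (fst d) (snd d)) (snd d))
  end.

Definition bnd (c : list nat) := match c with [] => S q | _ => q end.

Fixpoint valid (c : list nat) : Prop :=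
  match c with [] => True | a :: c' => valid c' /\ a < bnd c' end.

Fixpoint W (x : X) L (c : list nat) (i : nat) : X :=
  match c with
  | [] => x
  | a :: c' => if i <=? length c' then W x L c' i else snd (D x L (a :: c'))
  end.

Section Dec.
Variable x : X.
Variable L : option X -> X -> list X.
Hypothesis HL : lab_ok L.

Lemma W_cons a c i : W x L (a :: c) i =
  if i <=? length c then W x L c i else snd (D x L (a :: c)).
Proof. reflexivity. Qed.

Lemma W_last c : W x L c (length c) = snd (D x L c).
Proof. destruct c as [|a c]; [reflexivity|]. change (length (a :: c)) with (S (length c)).
  rewrite W_cons. destruct (Nat.leb_spec (S (length c)) (length c)); [lia|auto]. Qed.

Lemma W_hi a c : W x L (a :: c) (S (length c)) = snd (D x L (a :: c)).
Proof. apply (W_last (a :: c)). Qed.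

Lemma W_low a c i : i <= length c -> W x L (a :: c) i = W x L c i.
Proof. intros h; rewrite W_cons. destruct (Nat.leb_spec i (length c)); [auto|lia]. Qed.

Lemma W_0 c : W x L c 0 = x.
Proof. induction c as [|a c IH]; simpl; auto. Qed.

Lemma deg_bnd c : deg (fst (D x L c)) = bnd c.
Proof. destruct c; reflexivity. Qed.

Lemma D_prev a c : fst (D x L (a :: c)) = Some (W x L (a :: c) (length c)).
Proof. change (fst (D x L (a :: c))) with (Some (snd (D x L c))). rewrite W_low by lia. rewrite W_last. auto. Qed.

Lemma walk_D c : valid c -> nbw (length c) (W x L c) /\ entry_ok (fst (D x L c)) (snd (D x L c)).
Proof.
  induction c as [|a c IH]; intros hv.
  - split; [split; intros i hi; simpl in hi; lia|]. left; auto.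
  - destruct hv as [hv ha]. destruct (IH hv) as [[hw hnb] he].
    destruct (HL _ _ he) as [_ [hin hlen]].
    assert (hz : In (nth a (L (fst (D x L c)) (snd (D x L c))) (snd (D x L c)))
                    (L (fst (D x L c)) (snd (D x L c)))).
    { apply nth_In. rewrite hlen, deg_bnd; auto. }
    apply hin in hz. destruct hz as [hz1 hz2].
    split; [split|].
    + intros i hi. simpl length in hi. destruct (Nat.leb_spec (S i) (length c)).
      * rewrite !W_low by lia. apply hw; lia.
      * replace i with (length c) by lia. rewrite W_low by lia. rewrite W_last.
        rewrite W_hi. simpl. auto.
    + intros i hi. simpl length in hi. destruct (Nat.leb_spec (i + 2) (length c)).
      * rewrite !W_low by lia. apply hnb; lia.
      * replace (i + 2) with (S (length c)) by lia. rewrite W_hi.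
        rewrite (W_low a c i) by lia.
        destruct c as [|b c']; [simpl in hi; lia|].
        pose proof (D_prev b c') as hp. simpl length in *.
        replace i with (length c') by lia.
        intro e. apply hz2. transitivity (Some (W x L (b :: c') (length c'))); [f_equal; exact e|symmetry; exact hp].
    + right. exists (snd (D x L c)). split; auto. apply adj_sym; auto.
Qed.

Lemma D_surj y : exists c, valid c /\ snd (D x L c) = y.
Proof.
  destruct (nbw_exists x y) as [n [r [hr [r0 rn]]]].
  set (par := fun i => match i with 0 => None | S j => Some (r j) end).
  assert (H : forall i, i <= n -> exists c, valid c /\ length c = i /\ D x L c = (par i, r i)).
  { induction i as [|i IH]; intros hi.
    - exists []. simpl. rewrite r0. auto.
    - destruct IH as [c [hv [hl hD]]]; [lia|].
      assert (he : entry_ok (par i) (r i)).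
      { destruct i; [left; auto|right; exists (r i); split; auto].
        apply adj_sym. apply (proj1 hr); lia. }
      destruct (HL _ _ he) as [_ [hin hlen]].
      assert (hz : In (r (S i)) (L (par i) (r i))).
      { apply hin. split.
        - apply (proj1 hr); lia.
        - destruct i; simpl; [discriminate|]. intro e; injection e; intro e'.
          apply (proj2 hr i); [lia|]. replace (i + 2) with (S (S i)) by lia. auto. }
      destruct (In_nth _ _ (r i) hz) as [a [ha hna]].
      exists (a :: c). simpl. rewrite hD. simpl. rewrite hna. repeat split; auto; try lia.
      rewrite hlen in ha. rewrite <- deg_bnd, hD. auto. }
  destruct (H n) as [c [hv [_ hD]]]; auto. exists c. rewrite hD. auto.
Qed.

Lemma codes_eq : forall c c', valid c -> valid c' -> length c = length c' ->
  (forall i, i <= length c -> W x L c i = W x L c' i) -> c = c'.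
Proof.
  induction c as [|a c IH]; intros c' hv hv' hl hW; destruct c' as [|a' c']; simpl in hl;
    try discriminate; auto.
  injection hl; intro hl'.
  assert (ec : c = c').
  { apply IH; auto; [apply hv|apply hv'|]. intros i hi. rewrite <- (W_low a c), <- (W_low a' c') by lia.
    apply hW; simpl; lia. }
  subst c'. f_equal.
  pose proof (hW (S (length c)) (le_n _)) as e.
  rewrite !W_hi in e. simpl in e.
  destruct (walk_D c (proj1 hv)) as [_ he]. destruct (HL _ _ he) as [hnd [_ hlen]].
  rewrite (NoDup_nth _ (snd (D x L c))) in hnd. apply hnd; auto.
  - rewrite hlen, deg_bnd. apply hv.
  - rewrite hlen, deg_bnd. apply hv'.
Qed.

Lemma D_inj c c' : valid c -> valid c' -> snd (D x L c) = snd (D x L c') -> c = c'.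
Proof.
  intros hv hv' e.
  destruct (nbw_unique (length c) (W x L c) (length c') (W x L c')) as [h1 h2].
  - apply walk_D; auto.
  - apply walk_D; auto.
  - rewrite !W_0; auto.
  - rewrite !W_last; auto.
  - apply codes_eq; auto.
Qed.

Lemma D_adj_step a c : valid (a :: c) -> adj (snd (D x L c)) (snd (D x L (a :: c))).
Proof.
  intros hv. destruct (walk_D _ hv) as [[hw _] _].
  pose proof (hw (length c) ltac:(simpl; lia)) as h.
  rewrite W_low in h by lia. rewrite W_last in h.
  replace (S (length c)) with (length (a :: c)) in h by reflexivity. rewrite W_last in h. auto.
Qed.

Lemma D_adj c c' : valid c -> valid c' -> adj (snd (D x L c)) (snd (D x L c')) ->
  (exists a, c' = a :: c) \/ (exists a, c = a :: c').
Proof.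
  intros hv hv' ha.
  destruct (walk_D c hv) as [[hw hnb] _].
  destruct (classic (1 <= length c /\ W x L c (length c - 1) = snd (D x L c'))) as [[h1 E]|E].
  - right. destruct c as [|a c0]; [simpl in h1; lia|]. exists a. f_equal.
    simpl length in E. replace (S (length c0) - 1) with (length c0) in E by lia.
    destruct (nbw_unique (length c0) (W x L (a :: c0)) (length c') (W x L c')) as [e1 e2].
    + apply (nbw_weaken (length (a :: c0))); [split; auto|simpl; lia].
    + apply walk_D; auto.
    + rewrite !W_0; auto.
    + rewrite W_last; auto.
    + apply codes_eq; auto.
      * apply hv.
      * intros i hi. rewrite <- (W_low a c0) by lia. apply e2; auto.
  - left.
    set (n := length c).
    set (r := fun i => if i <=? n then W x L c i else snd (D x L c')).
    assert (hr : nbw (S n) r).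
    { split.
      - intros i hi. unfold r. destruct (Nat.leb_spec i n); destruct (Nat.leb_spec (S i) n).
        + apply hw; lia.
        + replace i with n by lia. unfold n. rewrite W_last. auto.
        + lia.
        + lia.
      - intros i hi. unfold r. destruct (Nat.leb_spec (i + 2) n); destruct (Nat.leb_spec i n).
        + apply hnb; lia.
        + lia.
        + intro e. apply E. split; [unfold n in *; lia|]. replace (length c - 1) with i by (unfold n in *; lia). auto.
        + lia. }
    destruct (nbw_unique (S n) r (length c') (W x L c')) as [e1 e2]; auto.
    + apply walk_D; auto.
    + unfold r. simpl. rewrite !W_0. auto.
    + unfold r. destruct (Nat.leb_spec (S n) n); [lia|]. rewrite W_last. auto.
    + destruct c' as [|a c0]; [simpl in e1; lia|]. exists a. f_equal.
      symmetry. simpl in e1. unfold n in e1. apply codes_eq; [exact hv|exact (proj1 hv')|lia|].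
      intros i hi. rewrite <- (W_low a c0) by lia. rewrite <- e2 by (unfold n in *; simpl in *; lia).
      unfold r. destruct (Nat.leb_spec i n); [auto|]. unfold n in *; simpl in *; lia.
Qed.

End Dec.


(** * Automorphisms from pairs of labelings *)
Definition code (x : X) L (y : X) : list nat :=
  epsilon (inhabits []) (fun c => valid c /\ snd (D x L c) = y).

Lemma code_spec x L y : lab_ok L -> valid (code x L y) /\ snd (D x L (code x L y)) = y.
Proof. intros HL. unfold code. apply epsilon_spec. apply D_surj; auto. Qed.

Lemma code_D x L c : lab_ok L -> valid c -> code x L (snd (D x L c)) = c.
Proof.
  intros HL hv. destruct (code_spec x L (snd (D x L c)) HL) as [h1 h2].
  apply (D_inj x L); auto.
Qed.

Definition kmap x0 L0 x1 L1 (y : X) : X := snd (D x1 L1 (code x0 L0 y)).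

Lemma kmap_D x0 L0 x1 L1 c : lab_ok L0 -> valid c -> kmap x0 L0 x1 L1 (snd (D x0 L0 c)) = snd (D x1 L1 c).
Proof. intros HL hv. unfold kmap. rewrite code_D; auto. Qed.

Lemma kmap_aut x0 L0 x1 L1 : lab_ok L0 -> lab_ok L1 -> is_aut X adj (kmap x0 L0 x1 L1).
Proof.
  intros H0 H1. split.
  - exists (kmap x1 L1 x0 L0). split.
    + intros y. destruct (code_spec x0 L0 y H0) as [hv hy].
      unfold kmap at 2. rewrite kmap_D; auto.
    + intros y. destruct (code_spec x1 L1 y H1) as [hv hy].
      unfold kmap at 2. rewrite kmap_D; auto.
  - intros y z. destruct (code_spec x0 L0 y H0) as [hv hy].
    destruct (code_spec x0 L0 z H0) as [hv' hz].
    rewrite <- hy, <- hz. rewrite !kmap_D; auto.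
    split; intros ha.
    + destruct (D_adj x0 L0 H0 _ _ hv hv' ha) as [[a e]|[a e]].
      * rewrite e in *. apply D_adj_step; auto.
      * rewrite e in *. apply adj_sym. apply D_adj_step; auto.
    + destruct (D_adj x1 L1 H1 _ _ hv hv' ha) as [[a e]|[a e]].
      * rewrite e in *. apply D_adj_step; auto.
      * rewrite e in *. apply adj_sym. apply D_adj_step; auto.
Qed.

Definition Ltr (g gi : X -> X) L : option X -> X -> list X :=
  fun p y => map g (L (option_map gi p) (gi y)).

Lemma Ltr_ok g gi L : (forall x, gi (g x) = x) -> (forall x, g (gi x) = x) ->
  (forall x y, adj x y <-> adj (g x) (g y)) -> lab_ok L -> lab_ok (Ltr g gi L).
Proof.
  intros hl hr ha HL p y he.
  assert (he' : entry_ok (option_map gi p) (gi y)).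
  { destruct he as [e|[p0 [e h]]]; subst; [left; auto|right]. exists (gi p0); split; auto.
    apply ha. rewrite !hr. auto. }
  destruct (HL _ _ he') as [h1 [h2 h3]]. unfold Ltr. split; [|split].
  - apply Injective_map_NoDup; auto. intros a b e. rewrite <- (hl a), <- (hl b), e. auto.
  - intros z. rewrite in_map_iff. split.
    + intros [w [e hw]]. subst z. apply h2 in hw. destruct hw as [hw1 hw2]. split.
      * apply ha in hw1. rewrite hr in hw1. auto.
      * intro e. apply hw2. destruct p; simpl in *; [|discriminate]. injection e; intro e'.
        rewrite <- e'. rewrite hl. auto.
    + intros [hz1 hz2]. exists (gi z). split; auto. apply h2. split.
      * apply ha. rewrite !hr. auto.
      * intro e. apply hz2. destruct p; simpl in *; [|discriminate]. injection e; intro e'.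
        rewrite <- (hr z), e', hr. auto.
  - rewrite length_map, h3. destruct p; auto.
Qed.

Lemma D_tr g gi L x c : (forall x, gi (g x) = x) ->
  D (g x) (Ltr g gi L) c = (option_map g (fst (D x L c)), g (snd (D x L c))).
Proof.
  intros hl. induction c as [|a c IH]; simpl; auto.
  rewrite IH. simpl. unfold Ltr. f_equal.
  replace (option_map gi (option_map g (fst (D x L c)))) with (fst (D x L c)).
  - rewrite hl. apply map_nth.
  - destruct (fst (D x L c)); simpl; auto. rewrite hl; auto.
Qed.

Definition xdec (a b : X) : {a = b} + {a <> b} := excluded_middle_informative (a = b).

Definition nbl (y : X) : list X :=
  epsilon (inhabits []) (fun l => NoDup l /\ length l = q + 1 /\ forall z, adj y z <-> In z l).

Lemma nbl_spec y : NoDup (nbl y) /\ length (nbl y) = q + 1 /\ forall z, adj y z <-> In z (nbl y).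
Proof. unfold nbl. apply epsilon_spec. destruct htree as [_ [_ [_ [_ h]]]]. apply h. Qed.

Definition Linit (p : option X) (y : X) : list X :=
  match p with None => nbl y | Some p0 => remove xdec p0 (nbl y) end.

Lemma remove_nodup (l : list X) a : NoDup l -> NoDup (remove xdec a l).
Proof.
  induction l as [|b l IH]; intros h; simpl; [constructor|].
  inversion h; subst. destruct (xdec a b); auto. constructor; auto.
  intro hi. apply in_remove in hi. tauto.
Qed.

Lemma remove_len (l : list X) a : NoDup l -> In a l -> length (remove xdec a l) = pred (length l).
Proof.
  induction l as [|b l IH]; intros h hi; simpl; [destruct hi|].
  inversion h; subst. destruct (xdec a b).
  - subst. rewrite notin_remove; auto.
  - simpl. destruct hi as [e|hi]; [congruence|]. rewrite IH; auto.
    destruct l; [destruct hi|]. simpl; auto.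
Qed.

Lemma Linit_ok : lab_ok Linit.
Proof.
  intros p y he. destruct (nbl_spec y) as [h1 [h2 h3]].
  destruct he as [e|[p0 [e hp]]]; subst; simpl.
  - split; auto. split; [|lia]. intros z. rewrite <- h3. split; [|tauto]. intros; split; auto; discriminate.
  - split; [apply remove_nodup; auto|]. split.
    + intros z. split.
      * intros hz. apply in_remove in hz. destruct hz as [hz1 hz2]. split; [apply h3; auto|].
        intro e; injection e; auto.
      * intros [hz1 hz2]. apply in_in_remove; [intro e; apply hz2; subst; auto|]. apply h3; auto.
    + rewrite remove_len; auto; [rewrite h2; lia|]. apply h3; auto.
Qed.


(** * Swapping a target into a prescribed position *)
Definition idx (z : X) (l : list X) : nat :=
  epsilon (inhabits 0) (fun j => j < length l /\ nth j l z = z).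

Lemma idx_spec z l : In z l -> idx z l < length l /\ nth (idx z l) l z = z.
Proof. intros h. unfold idx. apply epsilon_spec. apply In_nth; auto. Qed.

Definition swp (a j i : nat) := if i =? a then j else if i =? j then a else i.

Lemma swp_inv a j i : swp a j (swp a j i) = i.
Proof.
  unfold swp. destruct (Nat.eqb_spec i a) as [->|h1].
  - destruct (Nat.eqb_spec j a); auto. rewrite Nat.eqb_refl; auto.
  - destruct (Nat.eqb_spec i j) as [->|h2].
    + rewrite Nat.eqb_refl; auto.
    + rewrite (proj2 (Nat.eqb_neq _ _) h1), (proj2 (Nat.eqb_neq _ _) h2). auto.
Qed.

Lemma swp_lt a j i n : a < n -> j < n -> i < n -> swp a j i < n.
Proof. unfold swp. intros; destruct (Nat.eqb_spec i a); destruct (Nat.eqb_spec i j); lia. Qed.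

Definition put (z : X) (a : nat) (l : list X) : list X :=
  map (fun i => nth (swp a (idx z l) i) l z) (seq 0 (length l)).

Lemma put_len z a l : length (put z a l) = length l.
Proof. unfold put. rewrite length_map, length_seq. auto. Qed.

Lemma nth_map_seq (f : nat -> X) n k d : k < n -> nth k (map f (seq 0 n)) d = f k.
Proof.
  intros hk. rewrite (nth_indep _ d (f 0)) by (rewrite length_map, length_seq; auto).
  rewrite map_nth. rewrite seq_nth by auto. auto.
Qed.

Lemma put_nth z a l k d : k < length l -> nth k (put z a l) d = nth (swp a (idx z l) k) l z.
Proof. intros hk. unfold put. rewrite nth_map_seq; auto. Qed.

Section Put.
Variables (z : X) (a : nat) (l : list X).
Hypothesis hz : In z l.
Hypothesis ha : a < length l.

Lemma put_at d : nth a (put z a l) d = z.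
Proof. rewrite put_nth by auto. unfold swp. rewrite Nat.eqb_refl. apply idx_spec; auto. Qed.

Lemma put_other k d : k < length l -> k <> a -> k <> idx z l -> nth k (put z a l) d = nth k l d.
Proof.
  intros hk h1 h2. rewrite put_nth by auto. unfold swp.
  destruct (Nat.eqb_spec k a); [lia|]. destruct (Nat.eqb_spec k (idx z l)); [lia|].
  apply nth_indep; auto.
Qed.

Lemma put_In w : In w (put z a l) <-> In w l.
Proof.
  destruct (idx_spec z l hz) as [hi _].
  split; intros h.
  - destruct (In_nth _ _ w h) as [k [hk e]]. rewrite put_len in hk.
    rewrite put_nth in e by auto. rewrite <- e. apply nth_In. apply swp_lt; auto.
  - destruct (In_nth _ _ w h) as [k [hk e]].
    rewrite <- e. rewrite (nth_indep _ w z) by auto.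
    rewrite <- (swp_inv a (idx z l) k). rewrite <- (put_nth z a l (swp a (idx z l) k) w) by (apply swp_lt; auto).
    apply nth_In. rewrite put_len. apply swp_lt; auto.
Qed.

Lemma put_nodup : NoDup l -> NoDup (put z a l).
Proof.
  destruct (idx_spec z l hz) as [hi _].
  intros h. rewrite (NoDup_nth _ z) in h. rewrite (NoDup_nth _ z). rewrite put_len. intros i j hi' hj e.
  rewrite !put_nth in e by auto. apply h in e; try (apply swp_lt; auto).
  rewrite <- (swp_inv a (idx z l) i), <- (swp_inv a (idx z l) j), e. auto.
Qed.

Lemma put_noop : NoDup l -> nth a l z = z -> put z a l = l.
Proof.
  intros hnd e. destruct (idx_spec z l hz) as [hi e'].
  assert (ej : idx z l = a).
  { rewrite (NoDup_nth _ z) in hnd. apply hnd; auto. congruence. }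
  apply (nth_ext _ _ z z). { apply put_len. }
  intros n hn. rewrite put_len in hn. rewrite put_nth by auto. rewrite ej. unfold swp.
  destruct (Nat.eqb_spec n a); subst; auto.
Qed.

End Put.

Lemma put_ok z a l (P : X -> Prop) k : In z l -> a < k ->
  NoDup l /\ (forall w, In w l <-> P w) /\ length l = k ->
  NoDup (put z a l) /\ (forall w, In w (put z a l) <-> P w) /\ length (put z a l) = k.
Proof.
  intros hz ha [h1 [h2 h3]]. subst k. split; [apply put_nodup; auto|]. split.
  - intros w. rewrite put_In; auto.
  - apply put_len.
Qed.

Definition par (R : nat -> X) (n : nat) : option X :=
  match n with 0 => None | S m => Some (R m) end.

Fixpoint cA (A : nat -> nat) (n : nat) : list nat :=
  match n with 0 => [] | S m => A m :: cA A m end.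

Lemma ray_entry R n : is_ray X adj R -> entry_ok (par R n) (R n).
Proof. intros hr. destruct n; [left; auto|right]. eexists; split; [reflexivity|]. apply adj_sym, hr. Qed.

Lemma ray_next_in L R n : lab_ok L -> is_ray X adj R -> In (R (S n)) (L (par R n) (R n)).
Proof.
  intros HL hr. destruct (HL _ _ (ray_entry R n hr)) as [_ [h _]]. apply h. split; [apply hr|].
  destruct n; simpl; [discriminate|]. intro e; injection e; intro e'. apply (proj2 (hr n)); auto.
Qed.

Lemma ray_codes x L R A : lab_ok L -> is_ray X adj R -> R 0 = x ->
  (forall n, A n < deg (par R n) /\ nth (A n) (L (par R n) (R n)) (R n) = R (S n)) ->
  forall n, valid (cA A n) /\ D x L (cA A n) = (par R n, R n).
Proof.
  intros HL hr h0 hA. induction n as [|n IH].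
  - simpl. rewrite h0. auto.
  - destruct IH as [hv hD]. simpl. rewrite hD. simpl. split.
    + split; auto. destruct (hA n) as [h _]. destruct n; simpl in *; auto.
    + f_equal. apply hA.
Qed.

Section Lmod.
Variables (x : X) (L1 : option X -> X -> list X) (R1 R2 : nat -> X) (A B : nat -> nat).
Hypothesis HL1 : lab_ok L1.
Hypothesis hR1 : is_ray X adj R1.
Hypothesis hR2 : is_ray X adj R2.
Hypothesis h10 : R1 0 = x.
Hypothesis h20 : R2 0 = x.
Hypothesis hRR : forall i j, R1 i = R2 j -> i = 0 /\ j = 0.
Hypothesis hA0 : A 0 < S q.
Hypothesis hB0 : B 0 < S q.
Hypothesis hAB : A 0 <> B 0.
Hypothesis hAS : forall n, A (S n) < q.
Hypothesis hBS : forall n, B (S n) < q.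

Definition ex1 p y := exists n, p = Some (R1 n) /\ y = R1 (S n).
Definition ex2 p y := exists n, p = Some (R2 n) /\ y = R2 (S n).
Definition n1 p y := epsilon (inhabits 0) (fun n => p = Some (R1 n) /\ y = R1 (S n)).
Definition n2 p y := epsilon (inhabits 0) (fun n => p = Some (R2 n) /\ y = R2 (S n)).

Definition Lroot := put (R2 1) (B 0) (put (R1 1) (A 0) (L1 None x)).

Definition Lmod (p : option X) (y : X) : list X :=
  if excluded_middle_informative (p = None /\ y = x) then Lroot
  else if excluded_middle_informative (ex1 p y) then put (R1 (S (S (n1 p y)))) (A (S (n1 p y))) (L1 p y)
  else if excluded_middle_informative (ex2 p y) then put (R2 (S (S (n2 p y)))) (B (S (n2 p y))) (L1 p y)
  else L1 p y.

Lemma Lmod_cases p y : Lmod p y = L1 p y \/ (p = None /\ y = x /\ Lmod p y = Lroot) \/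
  (exists n, p = Some (R1 n) /\ y = R1 (S n) /\ Lmod p y = put (R1 (S (S n))) (A (S n)) (L1 p y)) \/
  (exists n, p = Some (R2 n) /\ y = R2 (S n) /\ Lmod p y = put (R2 (S (S n))) (B (S n)) (L1 p y)).
Proof.
  unfold Lmod. destruct (excluded_middle_informative (p = None /\ y = x)) as [h|h].
  { right; left; tauto. }
  destruct (excluded_middle_informative (ex1 p y)) as [h1|h1].
  { right; right; left. exists (n1 p y). unfold n1. pose proof (epsilon_spec (inhabits 0) _ h1) as e.
    destruct e as [e1 e2]. auto. }
  destruct (excluded_middle_informative (ex2 p y)) as [h2|h2].
  { right; right; right. exists (n2 p y). unfold n2. pose proof (epsilon_spec (inhabits 0) _ h2) as e.
    destruct e as [e1 e2]. auto. }
  left; auto.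
Qed.

Lemma Lroot_ok : NoDup Lroot /\ (forall w, In w Lroot <-> adj x w /\ Some w <> None) /\ length Lroot = S q.
Proof.
  destruct (HL1 None x (or_introl eq_refl)) as [h1 [h2 h3]].
  assert (i1 : In (R1 1) (L1 None x)).
  { apply h2. split; [rewrite <- h10; apply hR1|discriminate]. }
  assert (H := put_ok (R1 1) (A 0) (L1 None x) _ _ i1 hA0 (conj h1 (conj h2 h3))).
  unfold Lroot. apply put_ok; auto. apply H. split; [rewrite <- h20; apply hR2|discriminate].
Qed.

Lemma Lmod_ok : lab_ok Lmod.
Proof.
  intros p y he. destruct (Lmod_cases p y) as [e|[[e1 [e2 e]]|[[n [e1 [e2 e]]]|[n [e1 [e2 e]]]]]];
    rewrite e.
  - apply HL1; auto.
  - subst. apply Lroot_ok.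
  - destruct (HL1 _ _ he) as [h1 [h2 h3]]. apply put_ok; auto.
    + subst. apply (ray_next_in L1 R1 (S n)); auto.
    + rewrite e1; simpl. auto.
  - destruct (HL1 _ _ he) as [h1 [h2 h3]]. apply put_ok; auto.
    + subst. apply (ray_next_in L1 R2 (S n)); auto.
    + rewrite e1; simpl. auto.
Qed.

Lemma Lmod_root : Lmod None x = Lroot.
Proof. unfold Lmod. destruct (excluded_middle_informative (None = None /\ x = x)); tauto. Qed.

Lemma Lmod_R1 n : nth (A n) (Lmod (par R1 n) (R1 n)) (R1 n) = R1 (S n).
Proof.
  destruct n as [|n].
  - simpl. rewrite h10, Lmod_root. unfold Lroot.
    destruct (HL1 None x (or_introl eq_refl)) as [h1 [h2 h3]].
    assert (i1 : In (R1 1) (L1 None x)).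
    { apply h2. split; [rewrite <- h10; apply hR1|discriminate]. }
    assert (hl : A 0 < length (L1 None x)) by (rewrite h3; simpl; lia).
    assert (i2 : In (R2 1) (put (R1 1) (A 0) (L1 None x))).
    { apply (put_In _ _ _ i1 hl). apply h2. split; [rewrite <- h20; apply hR2|discriminate]. }
    destruct (idx_spec _ _ i2) as [j1 j2].
    assert (hl' : length (put (R1 1) (A 0) (L1 None x)) = S q) by (rewrite put_len, h3; auto).
    rewrite put_other; auto; try (rewrite hl'; lia).
    + apply put_at; auto.
    + intro e. assert (e' : R1 1 = R2 1).
      { rewrite <- (put_at (R1 1) (A 0) (L1 None x) i1 hl (R1 1)).
        rewrite e at 1. rewrite (nth_indep _ (R1 1) (R2 1)) by exact j1. exact j2. }
      apply hRR in e'. lia.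
  - simpl. unfold Lmod.
    destruct (excluded_middle_informative (Some (R1 n) = None /\ _)) as [h|_]; [destruct h; discriminate|].
    destruct (excluded_middle_informative (ex1 (Some (R1 n)) (R1 (S n)))) as [h|h];
      [|exfalso; apply h; exists n; auto].
    assert (en : n1 (Some (R1 n)) (R1 (S n)) = n).
    { unfold n1. destruct (epsilon_spec (inhabits 0) _ h) as [e1 _]. injection e1; intro e.
      symmetry; apply (ray_inj R1); auto. }
    rewrite en. apply put_at.
    + apply (ray_next_in L1 R1 (S n)); auto.
    + destruct (HL1 _ _ (ray_entry R1 (S n) hR1)) as [_ [_ h3]]. simpl in h3. rewrite h3. auto.
Qed.

Lemma Lmod_R2 n : nth (B n) (Lmod (par R2 n) (R2 n)) (R2 n) = R2 (S n).
Proof.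
  destruct n as [|n].
  - simpl. rewrite h20, Lmod_root. unfold Lroot.
    destruct (HL1 None x (or_introl eq_refl)) as [h1 [h2 h3]].
    assert (i1 : In (R1 1) (L1 None x)).
    { apply h2. split; [rewrite <- h10; apply hR1|discriminate]. }
    assert (hl : A 0 < length (L1 None x)) by (rewrite h3; simpl; lia).
    assert (i2 : In (R2 1) (put (R1 1) (A 0) (L1 None x))).
    { apply (put_In _ _ _ i1 hl). apply h2. split; [rewrite <- h20; apply hR2|discriminate]. }
    apply put_at; auto. rewrite put_len, h3; auto.
  - simpl. unfold Lmod.
    destruct (excluded_middle_informative (Some (R2 n) = None /\ _)) as [h|_]; [destruct h; discriminate|].
    destruct (excluded_middle_informative (ex1 (Some (R2 n)) (R2 (S n)))) as [h|_].
    { exfalso. destruct h as [m [_ e]]. symmetry in e. apply hRR in e. lia. }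
    destruct (excluded_middle_informative (ex2 (Some (R2 n)) (R2 (S n)))) as [h|h];
      [|exfalso; apply h; exists n; auto].
    assert (en : n2 (Some (R2 n)) (R2 (S n)) = n).
    { unfold n2. destruct (epsilon_spec (inhabits 0) _ h) as [e1 _]. injection e1; intro e.
      symmetry; apply (ray_inj R2); auto. }
    rewrite en. apply put_at.
    + apply (ray_next_in L1 R2 (S n)); auto.
    + destruct (HL1 _ _ (ray_entry R2 (S n) hR2)) as [_ [_ h3]]. simpl in h3. rewrite h3. auto.
Qed.

End Lmod.


Lemma idx_ray L R n : lab_ok L -> is_ray X adj R ->
  idx (R (S n)) (L (par R n) (R n)) < deg (par R n) /\
  nth (idx (R (S n)) (L (par R n) (R n))) (L (par R n) (R n)) (R n) = R (S n).
Proof.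
  intros HL hr. destruct (idx_spec _ _ (ray_next_in L R n HL hr)) as [h1 h2].
  destruct (HL _ _ (ray_entry R n hr)) as [_ [_ h3]]. rewrite h3 in h1. split; auto.
  rewrite (nth_indep _ (R n) (R (S n))); auto. rewrite h3; auto.
Qed.

Lemma deg_par R R' n : deg (par R n) = deg (par R' n).
Proof. destruct n; reflexivity. Qed.

Section AutLine.
Variables (o : X) (L0 : option X -> X -> list X) (u : Z -> X).
Variables (x : X) (L1 : option X -> X -> list X) (u' : Z -> X).
Hypothesis HL0 : lab_ok L0.
Hypothesis HL1 : lab_ok L1.
Hypothesis hu : is_line X adj u.
Hypothesis hu0 : u 0%Z = o.
Hypothesis hu' : is_line X adj u'.
Hypothesis hu'0 : u' 0%Z = x.

Definition Au n := idx (fwd u (S n)) (L0 (par (fwd u) n) (fwd u n)).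
Definition Bu n := idx (back u (S n)) (L0 (par (back u) n) (back u n)).
Definition LM := Lmod x L1 (fwd u') (back u') Au Bu.
Definition hm := kmap o L0 x LM.

Lemma fwd0 v : fwd v 0 = v 0%Z.
Proof. reflexivity. Qed.
Lemma back0 v : back v 0 = v 0%Z.
Proof. reflexivity. Qed.

Lemma hAB : Au 0 <> Bu 0.
Proof.
  intros e. destruct (idx_ray L0 (fwd u) 0 HL0 (line_fwd u hu)) as [_ h1].
  destruct (idx_ray L0 (back u) 0 HL0 (line_back u hu)) as [_ h2].
  fold (Au 0) in h1. fold (Bu 0) in h2. simpl in h1, h2. rewrite fwd0 in h1. rewrite back0 in h2.
  rewrite e in h1. rewrite h1 in h2. unfold fwd, back in h2. apply line_inj in h2; auto. lia.
Qed.

Ltac side := first [ assumption | apply line_fwd; assumption | apply line_back; assumption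
  | exact hu'0 | (intros i j e; apply line_inj in e; [lia|assumption])
  | apply (proj1 (idx_ray L0 (fwd u) 0 HL0 (line_fwd u hu)))
  | (intros k; apply (proj1 (idx_ray L0 (fwd u) (S k) HL0 (line_fwd u hu))))
  | apply (proj1 (idx_ray L0 (back u) 0 HL0 (line_back u hu)))
  | (intros k; apply (proj1 (idx_ray L0 (back u) (S k) HL0 (line_back u hu))))
  | apply hAB ].

Lemma LM_ok : lab_ok LM.
Proof. apply Lmod_ok; side. Qed.

Lemma hm_aut : is_aut X adj hm.
Proof. apply kmap_aut; auto. apply LM_ok. Qed.

Lemma hm_codes_f n : valid (cA Au n) /\ D o L0 (cA Au n) = (par (fwd u) n, fwd u n) /\
  D x LM (cA Au n) = (par (fwd u') n, fwd u' n).
Proof.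
  assert (hA : forall m, Au m < deg (par (fwd u) m) /\ nth (Au m) (L0 (par (fwd u) m) (fwd u m)) (fwd u m) = fwd u (S m)).
  { intros m. apply idx_ray; auto. apply line_fwd; auto. }
  destruct (ray_codes o L0 (fwd u) Au HL0 (line_fwd u hu) hu0 hA n) as [h1 h2].
  split; auto. split; auto.
  apply (ray_codes x LM (fwd u') Au LM_ok (line_fwd u' hu') hu'0).
  intros m. split.
  - rewrite (deg_par _ (fwd u)). apply idx_ray; auto. apply line_fwd; auto.
  - unfold LM. apply Lmod_R1; side.
Qed.

Lemma hm_codes_b n : valid (cA Bu n) /\ D o L0 (cA Bu n) = (par (back u) n, back u n) /\
  D x LM (cA Bu n) = (par (back u') n, back u' n).
Proof.
  assert (hA : forall m, Bu m < deg (par (back u) m) /\ nth (Bu m) (L0 (par (back u) m) (back u m)) (back u m) = back u (S m)).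
  { intros m. apply idx_ray; auto. apply line_back; auto. }
  destruct (ray_codes o L0 (back u) Bu HL0 (line_back u hu) hu0 hA n) as [h1 h2].
  split; auto. split; auto.
  apply (ray_codes x LM (back u') Bu LM_ok (line_back u' hu') hu'0).
  intros m. split.
  - rewrite (deg_par _ (back u)). apply idx_ray; auto. apply line_back; auto.
  - unfold LM. apply Lmod_R2; side.
Qed.

Lemma hm_line z : hm (u z) = u' z.
Proof.
  destruct (Z_le_gt_dec 0 z) as [h|h].
  - replace z with (Z.of_nat (Z.to_nat z)) by lia.
    destruct (hm_codes_f (Z.to_nat z)) as [hv [e1 e2]].
    change (u (Z.of_nat (Z.to_nat z))) with (fwd u (Z.to_nat z)).
    change (u' (Z.of_nat (Z.to_nat z))) with (fwd u' (Z.to_nat z)).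
    replace (fwd u (Z.to_nat z)) with (snd (D o L0 (cA Au (Z.to_nat z)))) by (rewrite e1; auto).
    unfold hm. rewrite kmap_D; auto. rewrite e2. auto.
  - replace z with (- Z.of_nat (Z.to_nat (- z)))%Z by lia.
    destruct (hm_codes_b (Z.to_nat (- z))) as [hv [e1 e2]].
    change (u (- Z.of_nat (Z.to_nat (- z)))%Z) with (back u (Z.to_nat (- z))).
    change (u' (- Z.of_nat (Z.to_nat (- z)))%Z) with (back u' (Z.to_nat (- z))).
    replace (back u (Z.to_nat (- z))) with (snd (D o L0 (cA Bu (Z.to_nat (- z))))) by (rewrite e1; auto).
    unfold hm. rewrite kmap_D; auto. rewrite e2. auto.
Qed.

End AutLine.


(** * Automorphism group and boundary *)
Definition ginv (g : Aut adj) : X -> X :=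
  proj1_sig (constructive_indefinite_description _ (proj1 (proj2_sig g))).

Lemma ginv_l (g : Aut adj) y : ginv g (proj1_sig g y) = y.
Proof. unfold ginv. destruct (constructive_indefinite_description _ _) as [h [h1 h2]]. simpl. auto. Qed.

Lemma ginv_r (g : Aut adj) y : proj1_sig g (ginv g y) = y.
Proof. unfold ginv. destruct (constructive_indefinite_description _ _) as [h [h1 h2]]. simpl. auto. Qed.

Lemma aut_adj (g : Aut adj) y z : adj y z <-> adj (proj1_sig g y) (proj1_sig g z).
Proof. apply (proj2 (proj2_sig g)). Qed.

Lemma ginv_aut g : is_aut X adj (ginv g).
Proof.
  split.
  - exists (proj1_sig g). split; intros; [apply ginv_r|apply ginv_l].
  - intros y z. rewrite (aut_adj g (ginv g y)). rewrite !ginv_r. tauto.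
Qed.

Definition ainv (g : Aut adj) : Aut adj := exist _ (ginv g) (ginv_aut g).

Lemma comp_aut f g : is_aut X adj f -> is_aut X adj g -> is_aut X adj (fun y => f (g y)).
Proof.
  intros [[fi [f1 f2]] fa] [[gi [g1 g2]] ga]. split.
  - exists (fun y => gi (fi y)). split; intros y; [rewrite f1, g1|rewrite g2, f2]; auto.
  - intros y z. rewrite ga, fa. tauto.
Qed.

Lemma id_aut : is_aut X adj (fun y => y).
Proof. split; [exists (fun y => y); auto|tauto]. Qed.

Lemma aut_inj f : is_aut X adj f -> forall a b, f a = f b -> a = b.
Proof. intros [[fi [f1 _]] _] a b e. rewrite <- (f1 a), <- (f1 b), e. auto. Qed.

Lemma aut_ray f r : is_aut X adj f -> is_ray X adj r -> is_ray X adj (fun n => f (r n)).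
Proof.
  intros hf hr n. destruct (hr n) as [a b]. split.
  - apply (proj1 (proj2 hf _ _)); auto.
  - intro e. apply b. apply (aut_inj f hf); auto.
Qed.

Lemma aut_line f u : is_aut X adj f -> is_line X adj u -> is_line X adj (fun z => f (u z)).
Proof.
  intros hf hu z. destruct (hu z) as [a b]. split.
  - apply (proj1 (proj2 hf _ _)); auto.
  - intro e. apply b. apply (aut_inj f hf); auto.
Qed.

Lemma ray_equiv_sym v w : ray_equiv X v w -> ray_equiv X w v.
Proof. intros [k [l h]]. exists l, k. intros n; auto. Qed.

Lemma ray_equiv_ext a a' b b' : (forall n, a n = a' n) -> (forall n, b n = b' n) ->
  ray_equiv X a b -> ray_equiv X a' b'.
Proof. intros ha hb [k [l h]]. exists k, l. intros n. rewrite <- ha, <- hb. auto. Qed.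

Lemma om_mem (w : Omega adj) r : proj1_sig w r -> is_ray X adj r.
Proof. destruct w as [A [v [hv e]]]. simpl. subst. intros [h _]; auto. Qed.

Lemma om_same (w : Omega adj) r r' : proj1_sig w r -> proj1_sig w r' -> ray_equiv X r r'.
Proof.
  destruct w as [A [v [hv e]]]. simpl. subst. intros [_ h1] [_ h2].
  apply (ray_equiv_trans X _ v); auto. apply ray_equiv_sym; auto.
Qed.

Lemma om_equiv (w : Omega adj) r r' : proj1_sig w r -> is_ray X adj r' -> ray_equiv X r r' -> proj1_sig w r'.
Proof.
  destruct w as [A [v [hv e]]]. simpl. subst. intros [_ h1] h2 h3. split; auto.
  apply (ray_equiv_trans X _ r); auto.
Qed.

Lemma om_eq (w1 w2 : Omega adj) r : proj1_sig w1 r -> proj1_sig w2 r -> w1 = w2.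
Proof.
  intros h1 h2. apply eq_sig_hprop; [intros; apply proof_irrelevance|].
  apply functional_extensionality; intros r'. apply propositional_extensionality.
  split; intros h.
  - apply (om_equiv w2 r); auto. apply (om_mem w1); auto. apply (om_same w1); auto.
  - apply (om_equiv w1 r); auto. apply (om_mem w2); auto. apply (om_same w2); auto.
Qed.

Lemma act_mem (g : Aut adj) (w : Omega adj) r : proj1_sig w r ->
  proj1_sig (act g w) (fun n => proj1_sig g (r n)).
Proof.
  intros h. simpl. unfold act_pred. split.
  - apply aut_ray; [apply (proj2_sig g)|]. apply (om_mem w); auto.
  - exists r. split; auto. apply ray_equiv_refl.
Qed.

Lemma act_mem_inv (g : Aut adj) (w : Omega adj) v : proj1_sig (act g w) v ->
  proj1_sig w (fun n => ginv g (v n)).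
Proof.
  simpl. unfold act_pred. intros [hv [r [hr he]]].
  apply (om_equiv w r); auto.
  - apply aut_ray; auto. apply ginv_aut.
  - apply (ray_equiv_ext (fun n => ginv g (proj1_sig g (r n))) _ (fun n => ginv g (v n))).
    + intros; apply ginv_l.
    + auto.
    + apply ray_equiv_map; auto.
Qed.

Lemma act_eq (g : Aut adj) (w w' : Omega adj) r : proj1_sig w r ->
  proj1_sig w' (fun n => proj1_sig g (r n)) -> act g w = w'.
Proof. intros h1 h2. apply (om_eq _ _ _ (act_mem g w r h1) h2). Qed.

Lemma shift_equiv (F : Z -> X) d : ray_equiv X (fun n => F (Z.of_nat n + d)%Z) (fun n => F (Z.of_nat n)).
Proof.
  destruct (Z_le_gt_dec 0 d).
  - exists 0, (Z.to_nat d). intros n. f_equal. lia.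
  - exists (Z.to_nat (- d)), 0. intros n. f_equal. lia.
Qed.

Lemma geo_norm (w1 w2 : Omega adj) y : geodesic adj w1 w2 y ->
  exists u, is_line X adj u /\ u 0%Z = y /\ proj1_sig w1 (back u) /\ proj1_sig w2 (fwd u).
Proof.
  intros [u1 [hl [h1 [h2 [z0 e]]]]].
  exists (fun z => u1 (z + z0)%Z). split; [|split; [|split]].
  - intros z. destruct (hl (z + z0)%Z) as [a b].
    replace (z + 1 + z0)%Z with (z + z0 + 1)%Z by lia. replace (z + 2 + z0)%Z with (z + z0 + 2)%Z by lia.
    auto.
  - simpl. auto.
  - apply (om_equiv w1 _ _ h1).
    + apply (line_back (fun z => u1 (z + z0)%Z)). intros z. destruct (hl (z + z0)%Z) as [a b].
      replace (z + 1 + z0)%Z with (z + z0 + 1)%Z by lia. replace (z + 2 + z0)%Z with (z + z0 + 2)%Z by lia.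
      auto.
    + apply ray_equiv_sym.
      apply (ray_equiv_ext (fun n => (fun z => u1 (- z)%Z) (Z.of_nat n + - z0)%Z) _
                           (fun n => (fun z => u1 (- z)%Z) (Z.of_nat n))).
      * intros n. unfold back. f_equal. lia.
      * intros n. auto.
      * apply (shift_equiv (fun z => u1 (- z)%Z) (- z0)).
  - apply (om_equiv w2 _ _ h2).
    + apply (line_fwd (fun z => u1 (z + z0)%Z)). intros z. destruct (hl (z + z0)%Z) as [a b].
      replace (z + 1 + z0)%Z with (z + z0 + 1)%Z by lia. replace (z + 2 + z0)%Z with (z + z0 + 2)%Z by lia.
      auto.
    + apply ray_equiv_sym. apply shift_equiv.
Qed.

Lemma line_shift (w1 w2 : Omega adj) u u' : is_line X adj u -> is_line X adj u' ->
  proj1_sig w1 (back u) -> proj1_sig w1 (back u') ->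
  proj1_sig w2 (fwd u) -> proj1_sig w2 (fwd u') ->
  exists d, forall z, u' z = u (z + d)%Z.
Proof.
  intros hu hu' b1 b2 f1 f2.
  destruct (om_same w1 _ _ b1 b2) as [k [l hb]].
  destruct (om_same w2 _ _ f1 f2) as [k2 [l2 hf]].
  unfold back, fwd in hb, hf.
  destruct (nbw_unique (k + k2) (fun i => u (- Z.of_nat k + Z.of_nat i)%Z)
                       (l + l2) (fun i => u' (- Z.of_nat l + Z.of_nat i)%Z)) as [e1 e2].
  - apply line_seg; auto.
  - apply line_seg; auto.
  - simpl. pose proof (hb 0) as e. simpl in e.
    replace (- Z.of_nat k + 0)%Z with (- Z.of_nat k)%Z by lia.
    replace (- Z.of_nat l + 0)%Z with (- Z.of_nat l)%Z by lia. auto.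
  - simpl. pose proof (hf 0) as e. simpl in e.
    replace (- Z.of_nat k + Z.of_nat (k + k2))%Z with (Z.of_nat k2) by lia.
    replace (- Z.of_nat l + Z.of_nat (l + l2))%Z with (Z.of_nat l2) by lia. auto.
  - exists (Z.of_nat l - Z.of_nat k)%Z. intros z.
    destruct (Z_le_gt_dec z (- Z.of_nat l)).
    + pose proof (hb (Z.to_nat (- z - Z.of_nat l))) as e.
      replace (- Z.of_nat (Z.to_nat (- z - Z.of_nat l) + l))%Z with z in e by lia.
      rewrite <- e. f_equal. lia.
    + destruct (Z_le_gt_dec (Z.of_nat l2) z).
      * pose proof (hf (Z.to_nat (z - Z.of_nat l2))) as e.
        replace (Z.of_nat (Z.to_nat (z - Z.of_nat l2) + l2)) with z in e by lia.
        rewrite <- e. f_equal. lia.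
      * pose proof (e2 (Z.to_nat (z + Z.of_nat l)) ltac:(lia)) as e.
        replace (- Z.of_nat l + Z.of_nat (Z.to_nat (z + Z.of_nat l)))%Z with z in e by lia.
        rewrite <- e. f_equal. lia.
Qed.

Lemma line_eq (w1 w2 : Omega adj) u u' : is_line X adj u -> is_line X adj u' ->
  proj1_sig w1 (back u) -> proj1_sig w1 (back u') ->
  proj1_sig w2 (fwd u) -> proj1_sig w2 (fwd u') -> u 0%Z = u' 0%Z ->
  forall z, u' z = u z.
Proof.
  intros hu hu' b1 b2 f1 f2 e0. destruct (line_shift w1 w2 u u') as [d hd]; auto.
  assert (d = 0%Z).
  { pose proof (hd 0%Z) as e. rewrite <- e0 in e. apply line_inj in e; [lia|auto]. }
  subst. intros z. rewrite hd. f_equal. lia.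
Qed.

Lemma geo_on (w1 w2 : Omega adj) u y : is_line X adj u -> proj1_sig w1 (back u) ->
  proj1_sig w2 (fwd u) -> geodesic adj w1 w2 y -> exists z, u z = y.
Proof.
  intros hu h1 h2 hg. destruct (geo_norm w1 w2 y hg) as [u2 [hu2 [e [b f]]]].
  destruct (line_shift w1 w2 u u2) as [d hd]; auto.
  exists (0 + d)%Z. rewrite <- hd. auto.
Qed.

Lemma geo_line (w1 w2 : Omega adj) u z : is_line X adj u -> proj1_sig w1 (back u) ->
  proj1_sig w2 (fwd u) -> geodesic adj w1 w2 (u z).
Proof. intros hu h1 h2. exists u. split; [auto|split; [auto|split; [auto|exists z; auto]]]. Qed.


Lemma D_agree x L L' N : (forall c0, valid c0 -> length c0 < N ->
    L' (fst (D x L c0)) (snd (D x L c0)) = L (fst (D x L c0)) (snd (D x L c0))) ->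
  forall c, valid c -> length c <= N -> D x L' c = D x L c.
Proof.
  intros H. induction c as [|a c IH]; intros hv hl; [reflexivity|].
  cbn [D]. destruct hv as [hv _]. simpl in hl. rewrite IH by (auto; lia). rewrite H by (auto; lia).
  reflexivity.
Qed.

Definition nbF (g : Aut adj) (Q : Aut adj -> Prop) :=
  exists F : list X, forall h : Aut adj, (forall y, In y F -> proj1_sig h y = proj1_sig g y) -> Q h.

Lemma nbF_and g Q1 Q2 : nbF g Q1 -> nbF g Q2 -> nbF g (fun h => Q1 h /\ Q2 h).
Proof.
  intros [F1 h1] [F2 h2]. exists (F1 ++ F2). intros h hh. split.
  - apply h1. intros y hy. apply hh. apply in_or_app; auto.
  - apply h2. intros y hy. apply hh. apply in_or_app; auto.
Qed.

Lemma gen_nb {T : Type} (S : (T -> Prop) -> Prop) (f : Aut adj -> T) (g : Aut adj) :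
  (forall B, S B -> B (f g) -> nbF g (fun h => B (f h))) ->
  forall U, generated S U -> U (f g) -> nbF g (fun h => U (f h)).
Proof.
  intros HS U hU hg. destruct (hU (f g) hg) as [l [hl [hin hsub]]].
  assert (H : nbF g (fun h => forall B, In B l -> B (f h))).
  { clear hsub. induction l as [|B l IH].
    - exists []. intros h _ B hB. destruct hB.
    - inversion hl; subst.
      destruct (nbF_and g (fun h => B (f h)) (fun h => forall B0, In B0 l -> B0 (f h))) as [F hF].
      + apply HS; auto. apply hin; left; auto.
      + apply IH; auto. intros B2 hB2. apply hin; right; auto.
      + exists F. intros h hh B0 hB0. destruct hB0 as [e|hB0].
        * subst B0. apply (proj1 (hF h hh)).
        * apply (proj2 (hF h hh)); auto. }
  destruct H as [F hF]. exists F. intros h hh. apply hsub. apply hF; auto.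
Qed.

Lemma bd_nb (w : Omega adj) a b (g : Aut adj) : bd_plus X adj a b (act g w) ->
  nbF g (fun h => bd_plus X adj a b (act h w)).
Proof.
  intros [v [hv [e0 e1]]].
  pose proof (act_mem_inv g w v hv) as hr.
  exists [ginv g (v 0); ginv g (v 1)]. intros h hh.
  exists (fun n => proj1_sig h (ginv g (v n))). split; [apply act_mem; auto|].
  rewrite !hh by (simpl; auto). rewrite !ginv_r. auto.
Qed.

Lemma Ltr_ray (g gi : X -> X) L R n : (forall y, gi (g y) = y) -> lab_ok L -> is_ray X adj R ->
  nth (idx (R (S n)) (L (par R n) (R n))) (Ltr g gi L (par (fun k => g (R k)) n) (g (R n))) (g (R n))
  = g (R (S n)).
Proof.
  intros hgi HL hR. unfold Ltr.
  replace (option_map gi (par (fun k => g (R k)) n)) with (par R n)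
    by (destruct n; simpl; [auto|rewrite hgi; auto]).
  rewrite hgi. destruct (idx_spec _ _ (ray_next_in L R n HL hR)) as [h1 h2].
  rewrite (nth_indep _ (g (R n)) (g (R (S n)))) by (rewrite length_map; auto).
  rewrite map_nth. f_equal. auto.
Qed.

Lemma glue (v : Z -> X) (N : nat) r1 r2 : is_line X adj v -> is_ray X adj r1 -> is_ray X adj r2 ->
  r1 0 = v (- Z.of_nat N)%Z -> r1 1 = v (- Z.of_nat N - 1)%Z ->
  r2 0 = v (Z.of_nat N) -> r2 1 = v (Z.of_nat N + 1)%Z ->
  exists v', is_line X adj v' /\ (forall z, (- Z.of_nat N - 1 <= z <= Z.of_nat N + 1)%Z -> v' z = v z) /\
    (forall n, v' (- Z.of_nat (n + N))%Z = r1 n) /\ (forall n, v' (Z.of_nat (n + N)) = r2 n).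
Proof.
  intros hv h1 h2 e10 e11 e20 e21.
  set (v' := fun z => if Z_le_gt_dec z (- Z.of_nat N) then r1 (Z.to_nat (- z - Z.of_nat N))
                      else if Z_le_gt_dec (Z.of_nat N) z then r2 (Z.to_nat (z - Z.of_nat N)) else v z).
  assert (ha : forall z, (- Z.of_nat N - 1 <= z <= Z.of_nat N + 1)%Z -> v' z = v z).
  { intros z hz. unfold v'. destruct (Z_le_gt_dec z (- Z.of_nat N)).
    - destruct (Z.eq_dec z (- Z.of_nat N)) as [e|e].
      + subst. replace (Z.to_nat (- - Z.of_nat N - Z.of_nat N)) with 0 by lia. auto.
      + replace (Z.to_nat (- z - Z.of_nat N)) with 1 by lia. rewrite e11. f_equal. lia.
    - destruct (Z_le_gt_dec (Z.of_nat N) z); auto.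
      destruct (Z.eq_dec z (Z.of_nat N)) as [e|e].
      + subst. replace (Z.to_nat (Z.of_nat N - Z.of_nat N)) with 0 by lia. auto.
      + replace (Z.to_nat (z - Z.of_nat N)) with 1 by lia. rewrite e21. f_equal. lia. }
  assert (hb : forall n, v' (- Z.of_nat (n + N))%Z = r1 n).
  { intros n. unfold v'. destruct (Z_le_gt_dec (- Z.of_nat (n + N)) (- Z.of_nat N)); [|lia].
    f_equal. lia. }
  assert (hc : forall n, v' (Z.of_nat (n + N)) = r2 n).
  { intros n. unfold v'. destruct (Z_le_gt_dec (Z.of_nat (n + N)) (- Z.of_nat N)).
    - assert (n = 0 /\ N = 0) as [-> ->] by lia. simpl. rewrite e10, e20. auto.
    - destruct (Z_le_gt_dec (Z.of_nat N) (Z.of_nat (n + N))); [|lia]. f_equal. lia. }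
  exists v'. split; [|split; [auto|split; auto]].
  intros z. destruct (Z_le_gt_dec (z + 2) (- Z.of_nat N)).
  - set (m := Z.to_nat (- z - 2 - Z.of_nat N)).
    replace z with (- Z.of_nat (S (S m) + N))%Z by lia.
    replace (- Z.of_nat (S (S m) + N) + 1)%Z with (- Z.of_nat (S m + N))%Z by lia.
    replace (- Z.of_nat (S (S m) + N) + 2)%Z with (- Z.of_nat (m + N))%Z by lia.
    rewrite !hb. destruct (h1 m) as [a1 b1]. destruct (h1 (S m)) as [a2 b2].
    split; [apply adj_sym; auto|auto].
  - destruct (Z_le_gt_dec (Z.of_nat N) z).
    + set (m := Z.to_nat (z - Z.of_nat N)).
      replace z with (Z.of_nat (m + N)) by lia.
      replace (Z.of_nat (m + N) + 1)%Z with (Z.of_nat (S m + N)) by lia.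
      replace (Z.of_nat (m + N) + 2)%Z with (Z.of_nat (S (S m) + N)) by lia.
      rewrite !hc. apply h2.
    + rewrite !ha by lia. apply hv.
Qed.


Lemma ray_shift R N : is_ray X adj R -> is_ray X adj (fun n => R (n + N)).
Proof. intros hr n. simpl. apply hr. Qed.

Lemma bd_of_ray (w : Omega adj) R N (g : Aut adj) : proj1_sig w R ->
  bd_plus X adj (proj1_sig g (R N)) (proj1_sig g (R (S N))) (act g w).
Proof.
  intros hR. exists (fun n => proj1_sig g (R (n + N))). split; [|split; reflexivity].
  apply act_mem. apply (om_equiv w R); auto.
  - apply ray_shift. apply (om_mem w); auto.
  - exists N, 0. intros n. f_equal. lia.
Qed.

Fixpoint nmax (r : X) (F : list X) : nat :=
  match F with [] => 0 | y :: F' => max (length (code r Linit y)) (nmax r F') end.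

Lemma nmax_spec r y F : In y F -> length (code r Linit y) <= nmax r F.
Proof. induction F as [|a F IH]; simpl; [tauto|]. intros [e|h]; [subst; lia|]. specialize (IH h). lia. Qed.

Section Main.
Variables (o : X) (wm wp : Omega adj) (u0 : Z -> X).
Hypothesis hne : wm <> wp.
Hypothesis hu : is_line X adj u0.
Hypothesis hu0 : u0 0%Z = o.
Hypothesis hb0 : proj1_sig wm (back u0).
Hypothesis hf0 : proj1_sig wp (fwd u0).

Definition triple (g : Aut adj) : Omega adj * Omega adj * X := (act g wm, act g wp, proj1_sig g o).

Lemma fix_geo (m : Aut adj) : M_stab X adj wm wp m -> forall z, proj1_sig m (u0 z) = u0 z.
Proof. intros hm z. apply hm. apply geo_line; auto. Qed.

Lemma triple_line (g : Aut adj) (u' : Z -> X) w1 w2 x : (forall z, proj1_sig g (u0 z) = u' z) ->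
  proj1_sig w1 (back u') -> proj1_sig w2 (fwd u') -> u' 0%Z = x -> triple g = (w1, w2, x).
Proof.
  intros H h1 h2 h3. unfold triple. f_equal; [f_equal|].
  - apply (act_eq g wm w1 (back u0) hb0).
    replace (fun n => proj1_sig g (back u0 n)) with (back u'); auto.
    apply functional_extensionality; intros n. unfold back. rewrite H. auto.
  - apply (act_eq g wp w2 (fwd u0) hf0).
    replace (fun n => proj1_sig g (fwd u0 n)) with (fwd u'); auto.
    apply functional_extensionality; intros n. unfold fwd. rewrite H. auto.
  - rewrite <- hu0, H. auto.
Qed.

Lemma triple_P g : P_pred X adj (triple g).
Proof.
  unfold P_pred, triple; simpl. split.
  - intro e. apply hne.
    pose proof (act_mem g wp (fwd u0) hf0) as h2. rewrite <- e in h2.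
    apply act_mem_inv in h2.
    replace (fun n => ginv g (proj1_sig g (fwd u0 n))) with (fwd u0) in h2
      by (apply functional_extensionality; intros; rewrite ginv_l; auto).
    apply (om_eq _ _ _ h2 hf0).
  - rewrite <- hu0. apply (geo_line _ _ (fun z => proj1_sig g (u0 z)) 0%Z).
    + apply aut_line; auto. apply (proj2_sig g).
    + apply (act_mem g wm (back u0) hb0).
    + apply (act_mem g wp (fwd u0) hf0).
Qed.

Definition rep (C : GmodM adj wm wp) : Aut adj :=
  proj1_sig (constructive_indefinite_description _ (proj2_sig C)).

Lemma rep_spec C : proj1_sig C = coset_pred X adj wm wp (rep C).
Proof. unfold rep. destruct (constructive_indefinite_description _ _) as [g e]. simpl. auto. Qed.

Definition psi (C : GmodM adj wm wp) : Pspace adj := exist _ (triple (rep C)) (triple_P (rep C)).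

Definition aid : Aut adj := exist _ (fun y => y) id_aut.

Lemma coset_self g : coset_pred X adj wm wp g g.
Proof. exists aid. split; [intros y _; reflexivity|intros; reflexivity]. Qed.

Lemma triple_coset g1 g2 : coset_pred X adj wm wp g1 = coset_pred X adj wm wp g2 -> triple g1 = triple g2.
Proof.
  intros e. assert (h : coset_pred X adj wm wp g1 g2) by (rewrite e; apply coset_self).
  destruct h as [m [hm hgm]]. symmetry.
  apply (triple_line g2 (fun z => proj1_sig g1 (u0 z))).
  - intros z. rewrite hgm, fix_geo; auto.
  - apply (act_mem g1 wm (back u0) hb0).
  - apply (act_mem g1 wp (fwd u0) hf0).
  - rewrite hu0; auto.
Qed.

Lemma psi_coset g : proj1_sig (psi (coset adj wm wp g)) = triple g.
Proof. simpl. apply triple_coset. rewrite <- rep_spec. reflexivity. Qed.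

Lemma agree_geo g1 g2 : triple g1 = triple g2 -> forall y, geodesic adj wm wp y ->
  proj1_sig g1 y = proj1_sig g2 y.
Proof.
  intros e.
  assert (e1 : act g1 wm = act g2 wm) by exact (f_equal (fun t => fst (fst t)) e).
  assert (e2 : act g1 wp = act g2 wp) by exact (f_equal (fun t => snd (fst t)) e).
  assert (e3 : proj1_sig g1 o = proj1_sig g2 o) by exact (f_equal (fun t => snd t) e).
  assert (hz : forall z, proj1_sig g2 (u0 z) = proj1_sig g1 (u0 z)).
  { apply (line_eq (act g1 wm) (act g1 wp) (fun z => proj1_sig g1 (u0 z)) (fun z => proj1_sig g2 (u0 z))).
    - apply aut_line; auto. apply (proj2_sig g1).
    - apply aut_line; auto. apply (proj2_sig g2).
    - apply (act_mem g1 wm (back u0) hb0).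
    - rewrite e1. apply (act_mem g2 wm (back u0) hb0).
    - apply (act_mem g1 wp (fwd u0) hf0).
    - rewrite e2. apply (act_mem g2 wp (fwd u0) hf0).
    - rewrite hu0. auto. }
  intros y hy. destruct (geo_on wm wp u0 y hu hb0 hf0 hy) as [z ez]. subst y. auto.
Qed.

Lemma coset_sub g1 g2 : (forall y, geodesic adj wm wp y -> proj1_sig g1 y = proj1_sig g2 y) ->
  forall h, coset_pred X adj wm wp g1 h -> coset_pred X adj wm wp g2 h.
Proof.
  intros hag h [m [hm hh]].
  exists (exist _ (fun y => ginv g2 (proj1_sig g1 (proj1_sig m y)))
            (comp_aut _ _ (ginv_aut g2) (comp_aut _ _ (proj2_sig g1) (proj2_sig m)))).
  split.
  - intros y hy. simpl. rewrite (hm y hy). rewrite hag by auto. apply ginv_l.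
  - intros y. simpl. rewrite ginv_r. apply hh.
Qed.

Lemma coset_eq g1 g2 : triple g1 = triple g2 -> coset adj wm wp g1 = coset adj wm wp g2.
Proof.
  intros e. apply eq_sig_hprop; [intros; apply proof_irrelevance|]. simpl.
  apply functional_extensionality; intros h; apply propositional_extensionality.
  split; apply coset_sub; intros y hy; [|symmetry]; apply agree_geo; auto.
Qed.

Lemma psi_inj C1 C2 : psi C1 = psi C2 -> C1 = C2.
Proof.
  intros e. assert (et : triple (rep C1) = triple (rep C2)) by (apply (f_equal (@proj1_sig _ _)) in e; exact e).
  pose proof (coset_eq _ _ et) as ec. apply (f_equal (@proj1_sig _ _)) in ec. simpl in ec.
  apply eq_sig_hprop; [intros; apply proof_irrelevance|]. rewrite !rep_spec. auto.
Qed.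

Lemma surj (t : Pspace adj) : exists g, triple g = proj1_sig t.
Proof.
  destruct t as [[[w1 w2] x] [hn hg]]. simpl in *.
  destruct (geo_norm w1 w2 x hg) as [u' [hl [e0 [hb hf]]]].
  unshelve eexists (exist _ (hm (u0 0%Z) Linit u0 (u' 0%Z) Linit u') _).
  { apply hm_aut; auto using Linit_ok. }
  apply (triple_line _ u'); auto. intros z. simpl. apply hm_line; auto using Linit_ok.
Qed.

Definition phi (t : Pspace adj) : GmodM adj wm wp :=
  coset adj wm wp (proj1_sig (constructive_indefinite_description _ (surj t))).

Lemma phi_spec t : exists g, phi t = coset adj wm wp g /\ triple g = proj1_sig t.
Proof. unfold phi. destruct (constructive_indefinite_description _ _) as [g e]. simpl. eauto. Qed.

Lemma psi_phi t : psi (phi t) = t.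
Proof.
  destruct (phi_spec t) as [g [e1 e2]]. rewrite e1.
  apply eq_sig_hprop; [intros; apply proof_irrelevance|]. rewrite psi_coset. auto.
Qed.

Lemma phi_psi C : phi (psi C) = C.
Proof. apply psi_inj. apply psi_phi. Qed.


Lemma cont_psi : continuous_top (GmodM_top adj wm wp) (P_top adj) psi.
Proof.
  intros V [Wt [hW hiff]]. unfold GmodM_top, quotient_top, aut_top. intros g hg.
  assert (hWg : Wt (triple g)) by (rewrite <- psi_coset; apply hiff; auto).
  assert (H : nbF g (fun h => Wt (triple h))).
  { refine (gen_nb _ triple g _ Wt hW hWg). intros B hB hBg.
    destruct hB as [[U [hU eB]]|[V0 [_ eB]]]; subst B; cbv beta in *.
    - refine (gen_nb _ (fun h => fst (triple h)) g _ U hU hBg). intros B hB hBg'.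
      destruct hB as [[U1 [hU1 eB]]|[U2 [hU2 eB]]]; subst B; cbv beta in *.
      + refine (gen_nb _ (fun h => fst (fst (triple h))) g _ U1 hU1 hBg'). intros B hB hBg''.
        destruct hB as [a [b [_ eB]]]. subst B. apply bd_nb; auto.
      + refine (gen_nb _ (fun h => snd (fst (triple h))) g _ U2 hU2 hBg'). intros B hB hBg''.
        destruct hB as [a [b [_ eB]]]. subst B. apply bd_nb; auto.
    - exists [o]. intros h hh. simpl. rewrite hh by (left; auto). auto. }
  destruct H as [F hF]. exists F. intros h hh. apply hiff. rewrite psi_coset. apply hF; auto.
Qed.


Lemma noop_ray (g : Aut adj) R n : is_ray X adj R ->
  put (proj1_sig g (R (S n))) (idx (R (S n)) (Linit (par R n) (R n)))
      (Ltr (proj1_sig g) (ginv g) Linit (par (fun k => proj1_sig g (R k)) n) (proj1_sig g (R n)))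
  = Ltr (proj1_sig g) (ginv g) Linit (par (fun k => proj1_sig g (R k)) n) (proj1_sig g (R n)).
Proof.
  intros hR. set (gR := fun k => proj1_sig g (R k)).
  assert (hgR : is_ray X adj gR) by (apply aut_ray; [apply (proj2_sig g)|auto]).
  assert (HLg : lab_ok (Ltr (proj1_sig g) (ginv g) Linit))
    by (apply Ltr_ok; [apply ginv_l|apply ginv_r|exact (aut_adj g)|apply Linit_ok]).
  destruct (HLg _ _ (ray_entry gR n hgR)) as [h1 [_ h3]].
  destruct (idx_ray Linit R n Linit_ok hR) as [i1 i2].
  change (proj1_sig g (R n)) with (gR n).
  apply put_noop; auto.
  - apply (ray_next_in _ gR n HLg hgR).
  - rewrite h3, (deg_par gR R). auto.
  - pose proof (Ltr_ray (proj1_sig g) (ginv g) Linit R n (ginv_l g) Linit_ok hR) as e.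
    rewrite (nth_indep _ _ (proj1_sig g (R n))); [exact e|]. rewrite h3, (deg_par gR R). auto.
Qed.

Definition cond (v : Z -> X) (N : nat) (p : Omega adj * Omega adj * X) :=
  bd_plus X adj (v (- Z.of_nat N)%Z) (v (- Z.of_nat N - 1)%Z) (fst (fst p)) /\
  bd_plus X adj (v (Z.of_nat N)) (v (Z.of_nat N + 1)%Z) (snd (fst p)) /\ snd p = v 0%Z.

Lemma local_surj (g : Aut adj) (F : list X) (t' : Pspace adj) :
  cond (fun z => proj1_sig g (u0 z)) (nmax (u0 0%Z) F) (proj1_sig t') ->
  exists h : Aut adj, triple h = proj1_sig t' /\ forall y, In y F -> proj1_sig h y = proj1_sig g y.
Proof.
  set (v := fun z => proj1_sig g (u0 z)). set (N := nmax (u0 0%Z) F).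
  destruct t' as [[[w1 w2] x'] hP]. simpl. intros [[r1 [hr1 [e10 e11]]] [[r2 [hr2 [e20 e21]]] ex]].
  simpl in ex.
  assert (hv : is_line X adj v) by (apply aut_line; [apply (proj2_sig g)|auto]).
  destruct (glue v N r1 r2 hv (om_mem w1 r1 hr1) (om_mem w2 r2 hr2) e10 e11 e20 e21)
    as [v' [hv' [ha [hb hc]]]].
  assert (hbv : proj1_sig w1 (back v')).
  { apply (om_equiv w1 r1); auto. apply line_back; auto. exists 0, N. intros n. unfold back.
    rewrite hb. f_equal. lia. }
  assert (hfv : proj1_sig w2 (fwd v')).
  { apply (om_equiv w2 r2); auto. apply line_fwd; auto. exists 0, N. intros n. unfold fwd.
    rewrite hc. f_equal. lia. }
  assert (hv'0 : v' 0%Z = v 0%Z) by (apply ha; lia).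
  set (Lg := Ltr (proj1_sig g) (ginv g) Linit).
  assert (HLg : lab_ok Lg) by (apply Ltr_ok; [apply ginv_l|apply ginv_r|exact (aut_adj g)|apply Linit_ok]).
  unshelve eexists (exist _ (hm (u0 0%Z) Linit u0 (v 0%Z) Lg v') _).
  { apply hm_aut; auto using Linit_ok. }
  split.
  - apply (triple_line _ v'); auto.
    + intros z; simpl; apply hm_line; auto using Linit_ok.
    + rewrite hv'0, ex. auto.
  - intros y hy. simpl.
    destruct (code_spec (u0 0%Z) Linit y Linit_ok) as [hvc hyc].
    set (c := code (u0 0%Z) Linit y) in *.
    rewrite <- hyc. unfold hm. rewrite kmap_D; [|apply Linit_ok|auto].
    assert (et : D (v 0%Z) Lg c = (option_map (proj1_sig g) (fst (D (u0 0%Z) Linit c)),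
                                   proj1_sig g (snd (D (u0 0%Z) Linit c))))
      by (apply D_tr; apply ginv_l).
    transitivity (snd (D (v 0%Z) Lg c)); [|rewrite et; reflexivity].
    f_equal. apply D_agree with N; [|auto|apply nmax_spec; auto].
    intros c0 hv0 hl0. unfold LM.
    destruct (Lmod_cases (v 0%Z) Lg (fwd v') (back v') (Au Linit u0) (Bu Linit u0)
                (fst (D (v 0%Z) Lg c0)) (snd (D (v 0%Z) Lg c0)))
      as [e|[[ep [ey e]]|[[n [ep [ey e]]]|[n [ep [ey e]]]]]]; rewrite e.
    + reflexivity.
    + rewrite ep, ey. unfold Lroot.
      assert (hf1 : fwd v' 1 = proj1_sig g (fwd u0 1)) by (unfold fwd; apply ha; lia).
      assert (hb1 : back v' 1 = proj1_sig g (back u0 1)) by (unfold back; apply ha; lia).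
      assert (E1 : put (proj1_sig g (fwd u0 1)) (Au Linit u0 0) (Lg None (v 0%Z)) = Lg None (v 0%Z))
        by exact (noop_ray g (fwd u0) 0 (line_fwd u0 hu)).
      assert (E2 : put (proj1_sig g (back u0 1)) (Bu Linit u0 0) (Lg None (v 0%Z)) = Lg None (v 0%Z))
        by exact (noop_ray g (back u0) 0 (line_back u0 hu)).
      rewrite hf1, E1, hb1, E2. reflexivity.
    + assert (hn : length c0 = S n).
      { destruct (walk_D (v 0%Z) Lg HLg c0 hv0) as [hw _].
        destruct (nbw_unique (length c0) (W (v 0%Z) Lg c0) (S n) (fwd v')) as [e1 _]; auto.
        - apply ray_nbw. apply line_fwd; auto.
        - rewrite W_0. symmetry. exact hv'0.
        - rewrite W_last, ey. reflexivity. }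
      assert (f0 : fwd v' n = proj1_sig g (fwd u0 n)) by (unfold fwd; apply ha; lia).
      assert (f1 : fwd v' (S n) = proj1_sig g (fwd u0 (S n))) by (unfold fwd; apply ha; lia).
      assert (f2 : fwd v' (S (S n)) = proj1_sig g (fwd u0 (S (S n)))) by (unfold fwd; apply ha; lia).
      rewrite ep, ey, f0, f1, f2.
      exact (noop_ray g (fwd u0) (S n) (line_fwd u0 hu)).
    + assert (hn : length c0 = S n).
      { destruct (walk_D (v 0%Z) Lg HLg c0 hv0) as [hw _].
        destruct (nbw_unique (length c0) (W (v 0%Z) Lg c0) (S n) (back v')) as [e1 _]; auto.
        - apply ray_nbw. apply line_back; auto.
        - rewrite W_0. symmetry. exact hv'0.
        - rewrite W_last, ey. reflexivity. }
      assert (f0 : back v' n = proj1_sig g (back u0 n)) by (unfold back; apply ha; lia).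
      assert (f1 : back v' (S n) = proj1_sig g (back u0 (S n))) by (unfold back; apply ha; lia).
      assert (f2 : back v' (S (S n)) = proj1_sig g (back u0 (S (S n)))) by (unfold back; apply ha; lia).
      rewrite ep, ey, f0, f1, f2.
      exact (noop_ray g (back u0) (S n) (line_back u0 hu)).
Qed.


Lemma bd_open a b : adj a b -> omega_top X adj (bd_plus X adj a b).
Proof.
  intros hab w hw. exists [bd_plus X adj a b]. split; [|split].
  - constructor; [|constructor]. exists a, b. auto.
  - intros B [<-|[]]; auto.
  - intros y hy. apply hy. left; auto.
Qed.

Lemma cont_phi : continuous_top (P_top adj) (GmodM_top adj wm wp) phi.
Proof.
  intros U hU. unfold GmodM_top, quotient_top, aut_top in hU.
  exists (fun p => exists v N, is_line X adj v /\ cond v N p /\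
            forall t' : Pspace adj, cond v N (proj1_sig t') -> U (phi t')).
  split.
  - intros p [v [N [hv [hc hall]]]].
    set (B1 := bd_plus X adj (v (- Z.of_nat N)%Z) (v (- Z.of_nat N - 1)%Z)).
    set (B2 := bd_plus X adj (v (Z.of_nat N)) (v (Z.of_nat N + 1)%Z)).
    assert (o1 : omega_top X adj B1).
    { apply bd_open. apply adj_sym. destruct (hv (- Z.of_nat N - 1)%Z) as [a _].
      replace (- Z.of_nat N - 1 + 1)%Z with (- Z.of_nat N)%Z in a by lia. auto. }
    assert (o2 : omega_top X adj B2).
    { apply bd_open. apply hv. }
    set (A2 := fun ab : Omega adj * Omega adj => B1 (fst ab) /\ B2 (snd ab)).
    assert (oA : prod_top (omega_top X adj) (omega_top X adj) A2).
    { intros ab hab. exists [fun ab => B1 (fst ab); fun ab => B2 (snd ab)]. split; [|split].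
      - constructor; [left; exists B1; auto|constructor; [right; exists B2; auto|constructor]].
      - intros B [<-|[<-|[]]]; apply hab.
      - intros y hy. split; [apply (hy _ (or_introl eq_refl))|apply (hy _ (or_intror (or_introl eq_refl)))]. }
    exists [fun p => A2 (fst p); fun p => snd p = v 0%Z]. split; [|split].
    + constructor; [left; exists A2; auto|constructor; [right; exists (fun y => y = v 0%Z); split; [exact I|auto]|constructor]].
    + destruct hc as [c1 [c2 c3]]. intros B [<-|[<-|[]]]; [split; auto|auto].
    + intros y hy. exists v, N. split; auto. split; auto.
      destruct (hy _ (or_introl eq_refl)) as [y1 y2]. split; [auto|split; [auto|]].
      apply (hy _ (or_intror (or_introl eq_refl))).
  - intros t. split.
    + intros hUt. destruct (phi_spec t) as [g [e1 e2]]. rewrite e1 in hUt.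
      destruct (hU g hUt) as [F hF].
      exists (fun z => proj1_sig g (u0 z)), (nmax (u0 0%Z) F). split; [|split].
      * apply aut_line; [apply (proj2_sig g)|auto].
      * rewrite <- e2. unfold cond, triple. simpl. split; [|split].
        -- pose proof (bd_of_ray wm (back u0) (nmax (u0 0%Z) F) g hb0) as h.
           unfold back in h. replace (- Z.of_nat (S (nmax (u0 0%Z) F)))%Z
             with (- Z.of_nat (nmax (u0 0%Z) F) - 1)%Z in h by lia. exact h.
        -- pose proof (bd_of_ray wp (fwd u0) (nmax (u0 0%Z) F) g hf0) as h.
           unfold fwd in h. replace (Z.of_nat (S (nmax (u0 0%Z) F)))
             with (Z.of_nat (nmax (u0 0%Z) F) + 1)%Z in h by lia. exact h.
        -- rewrite hu0. auto.
      * intros t' hc. destruct (local_surj g F t' hc) as [h [eh hag]].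
        destruct (phi_spec t') as [g' [e1' e2']]. rewrite e1'.
        replace (coset adj wm wp g') with (coset adj wm wp h).
        -- apply hF. intros y hy. apply hag; auto.
        -- apply coset_eq. rewrite eh, e2'. auto.
    + intros [v [N [hv [hc hall]]]]. apply hall; auto.
Qed.

Lemma main_sec : exists psi0 : GmodM adj wm wp -> Pspace adj,
    (forall g : Aut adj,
        proj1_sig (psi0 (coset adj wm wp g)) = (act g wm, act g wp, proj1_sig g o)) /\
    homeomorphism (GmodM_top adj wm wp) (P_top adj) psi0.
Proof.
  exists psi. split.
  - intros g. apply psi_coset.
  - exists phi. split; [apply phi_psi|split; [apply psi_phi|split; [apply cont_psi|apply cont_phi]]].
Qed.

End Main.

End Tree1.

Theorem proposition2p5 (X : Type) (adj : X -> X -> Prop) (q : nat) (hq : 2 <= q)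
  (htree : regular_tree adj q) (o : X) (wm wp : Omega adj)
  (hne : wm <> wp) (ho : geodesic adj wm wp o) :
  exists psi : GmodM adj wm wp -> Pspace adj,
    (forall g : Aut adj,
        proj1_sig (psi (coset adj wm wp g)) = (act g wm, act g wp, proj1_sig g o)) /\
    homeomorphism (GmodM_top adj wm wp) (P_top adj) psi.
Proof.
  destruct (geo_norm X adj q htree wm wp o ho) as [u0 [hu [hu0 [hb hf]]]].
  eapply main_sec; eauto.
Qed.
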